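(* Let $r\ge1$ be an integer, $\beta>0$, and let $Q$ be a complex polynomial of degree $r$ with $Q(0)=0$. Define polynomials $\widehat P_n(x)$, $n\ge0$, by $$\sum_{n=0}^\infty\frac{\widehat P_n(x)}{n!(\beta)_n}z^n=e^{Q(z)}\,{}_1F_1\left(\begin{matrix}-x\\ \beta\end{matrix};-z\right),$$ and let $\sigma$ be the operator $\sigma=x\,\partial^2T_-+\beta\,\partial$, where $\partial f(x)=f(x+1)-f(x)$ and $T_-f(x)=f(x-1)$; that is, $\sigma f(x)=(x+\beta)f(x+1)-(2x+\beta)f(x)+xf(x-1)$. Then for all $n\ge1$, $$\sigma\widehat P_n(x)=n(n+\beta-1)\,\widehat P_{n-1}(x).$$
   Context: $(a)_n=a(a+1)\cdots(a+n-1)$, $(a)_0=1$; ${}_1F_1\left(\begin{matrix}a\\ b\end{matrix};x\right)=\sum_{m\ge0}\frac{(a)_m}{(b)_m}\frac{x^m}{m!}$. *)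

(* Defs.v *)
From HB Require Import structures.
From mathcomp Require Import all_boot all_order all_algebra.
From mathcomp Require Import complex.
From mathcomp Require Import reals.
Set Implicit Arguments. Unset Strict Implicit. Unset Printing Implicit Defensive.
Import Order.TTheory GRing.Theory Num.Theory.
Local Open Scope ring_scope.

Definition poch {K : comRingType} (a : K) (n : nat) : K :=
  \prod_(i < n) (a + i%:R).

Definition poch_negX {K : comRingType} (m : nat) : {poly K} :=
  \prod_(i < m) (- 'X + (i%:R)%:P).

(* k-th coefficient of the formal power series exp(Q(z)), for Q(0) = 0:
   exp(Q) = sum_l Q^l / l!, and since Q(0)=0 only l <= k contribute to z^k. *)
Definition expQ_coef {K : fieldType} (Q : {poly K}) (k : nat) : K :=
  \sum_(l < k.+1) (Q ^+ l)`_k / (l`!)%:R.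

(* hat P_n(x): coefficient extraction from
   sum_n hatP_n(x) z^n/(n! (beta)_n) = e^{Q(z)} 1F1(-x; beta; -z),
   where 1F1(-x;beta;-z) = sum_m (-x)_m/(beta)_m (-z)^m/m!. *)
Definition Phat {K : fieldType} (Q : {poly K}) (beta : K) (n : nat) : {poly K} :=
  ((n`!)%:R * poch beta n) *:
  \sum_(m < n.+1) (expQ_coef Q (n - m) * (-1) ^+ m / (poch beta m * (m`!)%:R))
                   *: poch_negX m.

Definition sigma_op {K : comRingType} (beta : K) (f : {poly K}) : {poly K} :=
  ('X + beta%:P) * (f \Po ('X + 1)) - (2%:R *: 'X + beta%:P) * f
  + 'X * (f \Po ('X - 1)).

(* Main.v *)
Require Import Defs.
From HB Require Import structures.
From mathcomp Require Import all_boot all_order all_algebra.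
From mathcomp Require Import complex.
From mathcomp Require Import reals.
From mathcomp Require Import ring lra.
Import Order.TTheory GRing.Theory Num.Theory.
Local Open Scope ring_scope.

Section G.
Variable K : fieldType.
Implicit Types (f g : {poly K}) (m : nat).
Local Notation pn m := (@poch_negX K m).

Lemma lin_comp (c : K) q : (- 'X + c%:P) \Po q = - q + c%:P.
Proof. by rewrite comp_polyD linearN /= comp_polyX comp_polyC. Qed.

Lemma fA m : pn m.+1 \Po ('X + 1) = (- 'X - 1) * pn m.
Proof.
rewrite /poch_negX big_ord_recl comp_polyM rmorph_prod /= lin_comp; congr (_ * _).
  by rewrite addr0 opprD.
apply: eq_bigr => i _; rewrite lin_comp /bump /= add1n -natr1 polyCD polyC1; ring.
Qed.

Lemma fB m : - 'X * (pn m \Po ('X - 1)) = pn m.+1.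
Proof.
rewrite /poch_negX big_ord_recl rmorph_prod /= addr0; congr (_ * _).
apply: eq_bigr => i _; rewrite lin_comp /bump /= add1n -natr1 polyCD polyC1; ring.
Qed.

Lemma fR m : pn m.+1 = pn m * (- 'X + (m%:R)%:P).
Proof. by rewrite /poch_negX big_ord_recr. Qed.

Lemma sigma_add beta f g : sigma_op beta (f + g) = sigma_op beta f + sigma_op beta g.
Proof. rewrite /sigma_op !comp_polyD; ring. Qed.

Lemma sigma_scale beta (a : K) f : sigma_op beta (a *: f) = a *: sigma_op beta f.
Proof. rewrite /sigma_op !comp_polyZ -!mul_polyC; ring. Qed.

Lemma sigma_sum beta n (F : 'I_n -> {poly K}) :
  sigma_op beta (\sum_(i < n) F i) = \sum_(i < n) sigma_op beta (F i).
Proof.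
elim: n F => [|n IH] F; first by rewrite !big_ord0 /sigma_op comp_poly0; ring.
by rewrite !big_ord_recr /= sigma_add IH.
Qed.

Lemma sigma0 beta : sigma_op beta (pn 0) = 0.
Proof. rewrite /sigma_op /poch_negX big_ord0 !comp_polyC; rewrite -!mul_polyC; ring. Qed.

Lemma sigmaS beta m : sigma_op beta (pn m.+1) =
   - (m.+1%:R * (m%:R + beta)) *: pn m.
Proof.
rewrite /sigma_op fA.
have h1 : 'X * (pn m.+1 \Po ('X - 1)) =
   - (pn m * (- 'X + (m%:R)%:P)) * (- 'X + (m.+1%:R)%:P).
  rewrite fR rmorphM /= lin_comp -fR -fB -natr1 polyCD polyC1; ring.
rewrite h1 fR -mul_polyC.
rewrite -[RHS]mul_polyC !(rmorphN, rmorphM, rmorphD) /= !polyC_natr -!natr1. ring.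
Qed.

Lemma pochS (a : K) m : poch a m.+1 = poch a m * (a + m%:R).
Proof. by rewrite /poch big_ord_recr. Qed.

Lemma poch_neq0 (a : K) m : (forall i, a + i%:R != 0) -> poch a m != 0.
Proof.
move=> H; elim: m => [|m IH]; first by rewrite /poch big_ord0 oner_neq0.
by rewrite pochS mulf_neq0.
Qed.
End G.

Theorem mainTheorem4 (R : realType) (r : nat) (beta : R[i]) (Q : {poly R[i]}) :
  (1 <= r)%N -> 0 < beta -> size Q = r.+1 -> Q.[0] = 0 ->
  forall n : nat, (1 <= n)%N ->
    sigma_op beta (Phat Q beta n) = (n%:R * (n%:R + beta - 1)) *: Phat Q beta n.-1.
Proof.
move=> _ bpos _ _ [//|n] _.
have bi : forall i : nat, beta + i%:R != 0.
  move=> i; apply: lt0r_neq0; rewrite -[0]addr0; apply: ltr_leD => //.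
have fn : forall i : nat, (i`!)%:R != 0 :> R[i].
  by move=> i; rewrite pnatr_eq0 -lt0n fact_gt0.
rewrite /Phat sigma_scale sigma_sum big_ord_recl sigma_scale sigma0 scaler0 add0r /=.
rewrite !scaler_sumr; apply: eq_bigr => i _.
rewrite sigma_scale sigmaS !scalerA; congr (_ *: _).
rewrite /bump /= add1n subSS !pochS !factS !natrM exprS.
have := @poch_neq0 _ beta i bi; have := @poch_neq0 _ beta n bi; have := fn i; have := fn n; have := bi i; have := bi n.
move=> h1 h2 h3 h4 h5 h6. rewrite -!natr1. field. by rewrite h4 h6 h2 natr1 pnatr_eq0.
Qed.
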